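(* Let $N\ge 2$, let $\rho$ be a density matrix on $\mathbb{C}^N$ and let $|\psi\rangle\in\mathbb{C}^N$ be a unit vector. Then, computing $\mathcal{C}$ on the $N^2$-dimensional space $\mathbb{C}^N\otimes\mathbb{C}^N$, $$\mathcal{C}(\rho\otimes|\psi\rangle\langle\psi|)\le \frac{S(\rho)}{2\log_2 N}\left(D(\rho,\mathcal{I})+\frac{N-1}{N}\right).$$
   Context: For a density matrix $\rho$ (positive semidefinite, trace one) on an $N$-dimensional Hilbert space, $\mathcal{I}=\mathbb{I}/N$ is the normalized maximally mixed state. The von Neumann entropy is $S(\rho)=-\mathrm{Tr}[\rho\log_2\rho]$, and $D(\rho,\sigma)=\tfrac12\|\rho-\sigma\|_1$ is the trace distance. The Quantum Statistical Complexity Measure is $\mathcal{C}(\rho)=\frac{1}{\log_2 M}\,S(\rho)\,D(\rho,\mathbb{I}/M)$ for a state on an $M$-dimensional space. *)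

(* Defs.v *)
From Stdlib Require Import Reals Lra ClassicalEpsilon.
Open Scope R_scope.

Record C := mkC { re : R; im : R }.
Definition C0 : C := mkC 0 0.
Definition C1 : C := mkC 1 0.
Definition RtoC (x : R) : C := mkC x 0.
Definition Cadd (a b : C) : C := mkC (re a + re b) (im a + im b).
Definition Copp (a : C) : C := mkC (- re a) (- im a).
Definition Cmul (a b : C) : C :=
  mkC (re a * re b - im a * im b) (re a * im b + im a * re b).
Definition Cconj (a : C) : C := mkC (re a) (- im a).
Definition Cnorm2 (a : C) : R := re a * re a + im a * im a.

Fixpoint csum (n : nat) (f : nat -> C) : C :=
  match n with O => C0 | S k => Cadd (csum k f) (f k) end.
Fixpoint rsum (n : nat) (f : nat -> R) : R :=
  match n with O => 0 | S k => rsum k f + f k end.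

(* ---------- matrices: n x n matrices are functions on indices < n ---------- *)
Definition Mat := nat -> nat -> C.
Definition Vec := nat -> C.

Definition mat_eq (n : nat) (A B : Mat) : Prop :=
  forall i j, (i < n)%nat -> (j < n)%nat -> A i j = B i j.
Definition mmul (n : nat) (A B : Mat) : Mat :=
  fun i j => csum n (fun k => Cmul (A i k) (B k j)).
Definition madj (A : Mat) : Mat := fun i j => Cconj (A j i).
Definition msub (A B : Mat) : Mat := fun i j => Cadd (A i j) (Copp (B i j)).
Definition idm : Mat := fun i j => if Nat.eqb i j then C1 else C0.
Definition diagm (d : nat -> R) : Mat :=
  fun i j => if Nat.eqb i j then RtoC (d i) else C0.
Definition trace (n : nat) (A : Mat) : C := csum n (fun i => A i i).

Definition unitary (n : nat) (U : Mat) : Prop := mat_eq n (mmul n (madj U) U) idm.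
Definition hermitian (n : nat) (A : Mat) : Prop := mat_eq n A (madj A).
Definition psd (n : nat) (A : Mat) : Prop :=
  hermitian n A /\
  forall x : Vec,
    0 <= re (csum n (fun i => Cmul (Cconj (x i)) (csum n (fun j => Cmul (A i j) (x j))))).
Definition density (n : nat) (rho : Mat) : Prop := psd n rho /\ trace n rho = C1.
Definition unit_vec (n : nat) (psi : Vec) : Prop := rsum n (fun i => Cnorm2 (psi i)) = 1.
Definition ketbra (psi : Vec) : Mat := fun i j => Cmul (psi i) (Cconj (psi j)).
(* Kronecker product A (x) B of two N x N matrices, as an N^2 x N^2 matrix,
   with index (a,b) |-> a*N + b *)
Definition kron (N : nat) (A B : Mat) : Mat :=
  fun i j => Cmul (A (Nat.div i N) (Nat.div j N)) (B (Nat.modulo i N) (Nat.modulo j N)).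
Definition maxmixed (M : nat) : Mat := diagm (fun _ => / INR M).

Definition is_svd (n : nat) (A : Mat) (s : nat -> R) : Prop :=
  (forall i, 0 <= s i) /\
  exists U V, unitary n U /\ unitary n V /\ mat_eq n A (mmul n (mmul n U (diagm s)) (madj V)).
Definition singvals (n : nat) (A : Mat) : nat -> R :=
  epsilon (inhabits (fun _ : nat => 0)) (is_svd n A).
Definition trace_norm (n : nat) (A : Mat) : R := rsum n (singvals n A).
Definition tdist (n : nat) (rho sigma : Mat) : R := / 2 * trace_norm n (msub rho sigma).

Definition is_eigdec (n : nat) (A : Mat) (p : Mat * (nat -> R)) : Prop :=
  unitary n (fst p) /\ mat_eq n A (mmul n (mmul n (fst p) (diagm (snd p))) (madj (fst p))).
Definition eigdec (n : nat) (A : Mat) : Mat * (nat -> R) :=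
  epsilon (inhabits (idm, fun _ : nat => 0)) (is_eigdec n A).
Definition mfun (n : nat) (f : R -> R) (A : Mat) : Mat :=
  let p := eigdec n A in
  mmul n (mmul n (fst p) (diagm (fun i => f (snd p i)))) (madj (fst p)).

Definition log2 (x : R) : R := ln x / ln 2.
(* eta(x) = - x log2 x, with the convention 0 log 0 = 0 *)
Definition eta (x : R) : R := if Rle_dec x 0 then 0 else - (x * log2 x).
(* von Neumann entropy S(rho) = - Tr[rho log2 rho] = Tr[eta(rho)] *)
Definition vN (n : nat) (rho : Mat) : R := re (trace n (mfun n eta rho)).

Definition QSCM (M : nat) (rho : Mat) : R :=
  / log2 (INR M) * vN M rho * tdist M rho (maxmixed M).

(* Main.v *)
Require Import Defs.
From Stdlib Require Import Reals Lra Psatz ClassicalEpsilon.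
From mathcomp Require Import all_boot all_order all_algebra.
From mathcomp Require Import complex mxtens spectral.
From mathcomp Require Import Rstruct.
From mathcomp Require Import ring lra.
Import Order.TTheory GRing.Theory Num.Theory .
Set Implicit Arguments. Unset Strict Implicit. Unset Printing Implicit Defensive.
Local Open Scope ring_scope.
Local Open Scope sesquilinear_scope.
Local Open Scope complex_scope.

Definition K := (R[i])%type.
Definition phi (a : Defs.C) : K := Complex (re a) (im a).
Definition unphi (z : K) : Defs.C := mkC (complex.Re z) (complex.Im z).

Lemma phiK a : unphi (phi a) = a. Proof. by case: a. Qed.
Lemma unphiK z : phi (unphi z) = z. Proof. by case: z. Qed.
Lemma phi_inj : injective phi. Proof. exact: can_inj phiK. Qed.

Lemma phi_add a b : phi (Cadd a b) = phi a + phi b. Proof. by []. Qed.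
Lemma phi_mul a b : phi (Cmul a b) = phi a * phi b. Proof. by []. Qed.
Lemma phi_opp a : phi (Copp a) = - phi a. Proof. by []. Qed.
Lemma phi_conj a : phi (Cconj a) = (phi a)^*. Proof. by []. Qed.
Lemma phi_RtoC x : phi (RtoC x) = x%:C. Proof. by []. Qed.
Lemma phi_C0 : phi Defs.C0 = 0. Proof. by []. Qed.
Lemma phi_C1 : phi Defs.C1 = 1. Proof. by []. Qed.

Lemma phi_csum n f : phi (csum n f) = \sum_(i < n) phi (f i).
Proof. elim: n => [|n IH] /=; first by rewrite big_ord0. by rewrite big_ord_recr /= phi_add IH. Qed.

Lemma rsumE n f : rsum n f = \sum_(i < n) f i.
Proof. elim: n => [|n IH] /=; first by rewrite big_ord0. by rewrite big_ord_recr /= IH. Qed.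

Definition TM n (A : Mat) : 'M[K]_n := \matrix_(i < n, j < n) phi (A i j).
Definition FM n (M : 'M[K]_n) : Mat := fun i j =>
  match (insub i : option 'I_n), (insub j : option 'I_n) with
  | Some i', Some j' => unphi (M i' j') | _, _ => Defs.C0 end.

Lemma FMK n M : TM n (FM M) = M.
Proof. by apply/matrixP => i j; rewrite !mxE /FM !valK unphiK. Qed.

Lemma mat_eqP n A B : mat_eq n A B <-> TM n A = TM n B.
Proof.
split => [H|H]; first by apply/matrixP => i j; rewrite !mxE H //; apply/ssrnat.ltP.
move=> i j /ssrnat.ltP hi /ssrnat.ltP hj.
move/matrixP: H => /(_ (Ordinal hi) (Ordinal hj)); rewrite !mxE. exact: phi_inj.
Qed.

Lemma TM_mmul n A B : TM n (mmul n A B) = TM n A *m TM n B.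
Proof. apply/matrixP => i j; rewrite !mxE phi_csum.
apply: eq_bigr => k _; by rewrite !mxE phi_mul. Qed.

Lemma TM_madj n A : TM n (madj A) = (TM n A)^t*.
Proof. by apply/matrixP => i j; rewrite !mxE. Qed.

Lemma TM_msub n A B : TM n (msub A B) = TM n A - TM n B.
Proof. by apply/matrixP => i j; rewrite !mxE. Qed.

Lemma eqbE (i j : nat) : Nat.eqb i j = (i == j).
Proof. by apply/idP/idP => [/Nat.eqb_eq/eqP|/eqP/Nat.eqb_eq]. Qed.

Definition dg n (d : nat -> R) : 'M[K]_n := diag_mx (\row_(i < n) (d i)%:C).

Lemma TM_diagm n d : TM n (diagm d) = dg n d.
Proof. apply/matrixP => i j; rewrite !mxE /diagm eqbE.
case: eqP => [/val_inj ->|ne]; first by rewrite eqxx.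
by case: eqP => // E; case: ne; rewrite E. Qed.

Lemma TM_idm n : TM n idm = 1%:M.
Proof. apply/matrixP => i j; rewrite !mxE /idm eqbE.
case: eqP => [/val_inj ->|ne]; first by rewrite eqxx.
by case: eqP => // E; case: ne; rewrite E. Qed.

Lemma phi_trace n A : phi (trace n A) = \tr (TM n A).
Proof. rewrite /trace phi_csum /mxtrace; apply: eq_bigr => i _; by rewrite mxE. Qed.
Lemma unitaryE n U : unitary n U <-> (TM n U)^t* *m TM n U = 1%:M.
Proof. by rewrite /unitary mat_eqP TM_mmul TM_madj TM_idm. Qed.

Lemma hermitianE n A : Defs.hermitian n A <-> TM n A = (TM n A)^t*.
Proof. by rewrite /Defs.hermitian mat_eqP TM_madj. Qed.

Definition dfun n (x : 'rV[K]_n) (k : nat) : R :=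
  match (insub k : option 'I_n) with Some i => complex.Re (x 0 i) | None => 0 end.

Lemma spectral_herm n (A : 'M[K]_n) : A = A^t* ->
  exists (U : 'M[K]_n) (d : nat -> R), U^t* *m U = 1%:M /\ A = U *m dg n d *m U^t*.
Proof.
move=> hA.
have hA' : (A : 'M[K]_n) \is hermsymmx by apply/is_hermitianmxP; rewrite expr0 scale1r.
have /orthomx_spectralP HE := hermitian_normalmx hA'.
have Pu := spectral_unitarymx A.
have Rd := hermitian_spectral_diag_real hA'.
exists ((spectralmx A)^t*), (dfun (spectral_diag A)); split.
  by rewrite trmxCK; apply/unitarymxP.
rewrite trmxCK {1}HE invmx_unitary //; congr (_ *m _ *m _).
congr diag_mx; apply/matrixP => i j; rewrite ord1 !mxE /dfun valK.
symmetry; apply: RRe_real. by move/mxOverP: Rd => /(_ 0 j).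
Qed.
Lemma unit_r n (U : 'M[K]_n) : U^t* *m U = 1%:M -> U *m U^t* = 1%:M.
Proof. exact: mulmx1C. Qed.

Lemma adj_mul n (A B : 'M[K]_n) : (A *m B)^t* = B^t* *m A^t*.
Proof. by rewrite trmx_mul map_mxM. Qed.

Lemma adjK n (A : 'M[K]_n) : A^t*^t* = A.
Proof. exact: trmxCK. Qed.

Lemma dg_adj n d : (dg n d)^t* = dg n d.
Proof. apply/matrixP => i j; rewrite !mxE; case: (i =P j) => [->|ne].
  by rewrite eqxx /= mulr1n; apply: conjc_real.
by rewrite (introF eqP) //; [ rewrite mulr0n conjC0 | move=> E; apply: ne]. Qed.

Lemma colsum n (X : 'M[K]_n) l : X^t* *m X = 1%:M -> \sum_k (X k l)^* * X k l = 1.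
Proof. move/matrixP => /(_ l l); rewrite !mxE eqxx mulr1n => <-.
by apply: eq_bigr => k _; rewrite !mxE. Qed.

Lemma eig_sum_uniq n (U V : 'M[K]_n) (d e : nat -> R) (g : R -> R) :
  U^t* *m U = 1%:M -> V^t* *m V = 1%:M ->
  U *m dg n d *m U^t* = V *m dg n e *m V^t* ->
  \sum_(i < n) g (d i) = \sum_(i < n) g (e i).
Proof.
move=> hU hV hE.
have hU' := unit_r hU; have hV' := unit_r hV.
set X := V^t* *m U.
have hX : X *m dg n d = dg n e *m X.
  have h1 : V^t* *m (U *m dg n d *m U^t*) *m U = X *m dg n d.
    by rewrite /X -!mulmxA hU mulmx1.
  have h2 : V^t* *m (V *m dg n e *m V^t*) *m U = dg n e *m X.
    by rewrite /X !mulmxA hV mul1mx.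
  by rewrite -h1 hE h2.
have hXc : X^t* *m X = 1%:M.
  by rewrite /X adj_mul adjK -mulmxA [V *m _]mulmxA hV' mul1mx.
have hXr : (X^t*)^t* *m X^t* = 1%:M by rewrite adjK; apply: unit_r.
clearbody X.
have key : forall k l : 'I_n, (g (d l))%:C * X k l = (g (e k))%:C * X k l.
  move=> k l; move/matrixP: hX => /(_ k l).
  rewrite mul_mx_diag mul_diag_mx !mxE => h.
  have [->|nz] := eqVneq (X k l) 0; first by rewrite !mulr0.
  suff -> : d l = e k by [].
  apply: complexI; apply: (mulfI nz); by rewrite h mulrC.
apply: complexI; rewrite !rmorph_sum /=.
transitivity (\sum_(l < n) \sum_(k < n) (g (d l))%:C * ((X k l)^* * X k l)).
  by apply: eq_bigr => l _; rewrite -mulr_sumr colsum // mulr1.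
rewrite (eq_bigr (fun l : 'I_n => \sum_(k < n) (g (e k))%:C * ((X k l)^* * X k l))); last first.
  by move=> l _; apply: eq_bigr => k _; rewrite mulrCA key mulrCA.
rewrite exchange_big /=; apply: eq_bigr => k _.
rewrite -mulr_sumr.
have := colsum k hXr.
under eq_bigr do rewrite !mxE conjCK.
by under eq_bigr do rewrite mulrC; move=> ->; rewrite mulr1.
Qed.
Lemma tr_dg n f : \tr (dg n f) = (\sum_(i < n) f i)%:C.
Proof. rewrite mxtrace_diag rmorph_sum; apply: eq_bigr => i _; by rewrite mxE. Qed.

Lemma eigdecE n A p : is_eigdec n A p <->
  (TM n p.1)^t* *m TM n p.1 = 1%:M /\ TM n A = TM n p.1 *m dg n p.2 *m (TM n p.1)^t*.
Proof. by rewrite /is_eigdec unitaryE mat_eqP !TM_mmul TM_madj TM_diagm. Qed.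

Lemma eigdec_spec n A (U : 'M[K]_n) d : U^t* *m U = 1%:M ->
  TM n A = U *m dg n d *m U^t* -> is_eigdec n A (eigdec n A).
Proof.
move=> hU hA; rewrite /eigdec; apply: epsilon_spec.
exists (FM U, d); apply/eigdecE; by rewrite /= FMK.
Qed.

Lemma re_phi a : re a = complex.Re (phi a). Proof. by []. Qed.

Lemma vN_eq n A (U : 'M[K]_n) d : U^t* *m U = 1%:M ->
  TM n A = U *m dg n d *m U^t* -> vN n A = \sum_(i < n) Defs.eta (d i).
Proof.
move=> hU hA; rewrite /vN /mfun; have := eigdec_spec hU hA.
case: (eigdec n A) => V e /eigdecE /= [hV hAV].
rewrite re_phi.
rewrite phi_trace !TM_mmul TM_madj TM_diagm mxtrace_mulC mulmxA hV mul1mx tr_dg /=.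
apply: (eig_sum_uniq Defs.eta hV hU); by rewrite -hAV.
Qed.
Lemma svdE n A s : is_svd n A s <->
  (forall i, (0 <= s i)%R) /\ exists U V : 'M[K]_n, U^t* *m U = 1%:M /\ V^t* *m V = 1%:M /\
     TM n A = U *m dg n s *m V^t*.
Proof.
split.
  move=> [hs [U [V [hU [hV hA]]]]]; split; first by move=> i; apply/RleP.
  exists (TM n U), (TM n V); move: hU hV hA; rewrite !unitaryE mat_eqP !TM_mmul TM_madj TM_diagm.
  by [].
move=> [hs [U [V [hU [hV hA]]]]]; split; first by move=> i; apply/RleP.
exists (FM U), (FM V); rewrite !unitaryE mat_eqP !TM_mmul TM_madj TM_diagm !FMK. by [].
Qed.

Lemma svd_spec n A (U V : 'M[K]_n) s : (forall i, (0 <= s i)%R) ->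
  U^t* *m U = 1%:M -> V^t* *m V = 1%:M -> TM n A = U *m dg n s *m V^t* ->
  is_svd n A (singvals n A).
Proof.
move=> hs hU hV hA; rewrite /singvals; apply: epsilon_spec.
exists s; apply/svdE; split => //; by exists U, V.
Qed.

Lemma Re_conj_mul (w : K) : complex.Re (w^* * w) = complex.Re w ^+ 2 + complex.Im w ^+ 2.
Proof. case: w => a b /=. rewrite !expr2. ring. Qed.

Lemma Re_mulC (w : K) (x : R) : complex.Re (w * x%:C) = complex.Re w * x.
Proof. case: w => a b /=. ring. Qed.

Lemma Re_le1 n (W : 'M[K]_n) k : W^t* *m W = 1%:M -> complex.Re (W k k) <= 1.
Proof.
move=> hW; have := colsum k hW => /(congr1 (@complex.Re R)).
rewrite raddf_sum /= (bigD1 k) //= => h.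
have h2 : 0 <= \sum_(j < n | j != k) complex.Re ((W j k)^* * W j k).
  by apply: sumr_ge0 => j _; rewrite Re_conj_mul addr_ge0 // sqr_ge0.
move: h h2; rewrite Re_conj_mul.
set a := complex.Re (W k k); set b := complex.Im (W k k); set c := \sum_(_ < _ | _) _.
move=> h h2.
have h' : a ^+ 2 + b ^+ 2 + c = 1 by rewrite h.
have hb : 0 <= b ^+ 2 := sqr_ge0 b.
rewrite !expr2 in h' hb. nra.
Qed.
Lemma unit_mul n (A B : 'M[K]_n) : A^t* *m A = 1%:M -> B^t* *m B = 1%:M ->
  (A *m B)^t* *m (A *m B) = 1%:M.
Proof. move=> hA hB; by rewrite adj_mul -mulmxA [A^t* *m _]mulmxA hA mul1mx. Qed.

Lemma unit_adj n (A : 'M[K]_n) : A^t* *m A = 1%:M -> A^t*^t* *m A^t* = 1%:M.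
Proof. by move=> h; rewrite adjK; apply: unit_r. Qed.

Lemma tr_diag_sum n (W : 'M[K]_n) s :
  \tr (W *m dg n s) = \sum_(k < n) W k k * (s k)%:C.
Proof. rewrite /mxtrace; apply: eq_bigr => k _; by rewrite mul_mx_diag !mxE. Qed.

Lemma tr_bound n (Z U V : 'M[K]_n) (s : nat -> R) : (forall i : 'I_n, 0 <= s i) ->
  Z^t* *m Z = 1%:M -> U^t* *m U = 1%:M -> V^t* *m V = 1%:M ->
  complex.Re (\tr (Z *m (U *m dg n s *m V^t*))) <= \sum_(i < n) s i.
Proof.
move=> hs hZ hU hV.
rewrite mulmxA mxtrace_mulC !mulmxA.
have hW : (V^t* *m Z *m U)^t* *m (V^t* *m Z *m U) = 1%:M.
  by apply: unit_mul => //; apply: unit_mul => //; apply: unit_adj.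
rewrite tr_diag_sum raddf_sum /=; apply: ler_sum => k _.
rewrite Re_mulC; have := Re_le1 k hW; have := hs k; nra.
Qed.

Lemma tr_eq n (U V : 'M[K]_n) s : U^t* *m U = 1%:M -> V^t* *m V = 1%:M ->
  complex.Re (\tr ((V *m U^t*) *m (U *m dg n s *m V^t*))) = \sum_(i < n) s i
  /\ (V *m U^t*)^t* *m (V *m U^t*) = 1%:M.
Proof.
move=> hU hV; split; last by apply: unit_mul => //; apply: unit_adj.
rewrite !mulmxA -[V *m U^t* *m U]mulmxA hU mulmx1 mxtrace_mulC mulmxA hV mul1mx.
by rewrite tr_dg.
Qed.
Lemma dg_mul n d e : dg n d *m dg n e = dg n (fun k => d k * e k).
Proof. apply/matrixP => i j; rewrite mul_diag_mx !mxE.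
by rewrite mulrnAr rmorphM. Qed.

Lemma dg1 n : dg n (fun _ => 1) = 1%:M.
Proof. by apply/matrixP => i j; rewrite !mxE. Qed.

Lemma dg_ext n (d e : nat -> R) : (forall k : 'I_n, d k = e k) -> dg n d = dg n e.
Proof. by move=> h; apply/matrixP => i j; rewrite !mxE h. Qed.

Lemma eig_svd n (U : 'M[K]_n) d : U^t* *m U = 1%:M ->
  exists V : 'M[K]_n, V^t* *m V = 1%:M /\
    U *m dg n d *m U^t* = U *m dg n (fun k => `|d k|) *m V^t*.
Proof.
move=> hU; set sg := fun k => if 0 <= d k then (1 : R) else -1.
exists (U *m dg n sg); split.
  apply: unit_mul => //; rewrite dg_adj dg_mul -dg1; apply: dg_ext => k.
  by rewrite /sg; case: ifP => _; rewrite ?mulr1 ?mulrNN ?mulr1.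
rewrite adj_mul dg_adj !mulmxA -[U *m dg n _ *m dg n sg]mulmxA dg_mul; congr (_ *m _ *m _).
apply: dg_ext => k; rewrite /sg; case: ifP => h.
  by rewrite mulr1 ger0_norm.
by rewrite ltr0_norm ?mulrNN ?mulr1 // ltNge h.
Qed.

Lemma herm_svd n A : Defs.hermitian n A -> is_svd n A (singvals n A).
Proof.
move/hermitianE => /spectral_herm [U [d [hU hA]]].
have [V [hV E]] := eig_svd d hU.
apply: (@svd_spec n A U V (fun k => `|d k|)) => //; by rewrite hA E.
Qed.
Lemma divE m d : Nat.div m d = (m %/ d)%N.
Proof.
case: d => [|d]; first by rewrite divn0.
symmetry; apply: (@Nat.div_unique _ _ _ (m %% d.+1)%N).
  by apply/ssrnat.ltP; rewrite ltn_mod.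
by rewrite {1}(divn_eq m d.+1) mulnC.
Qed.

Lemma modE m d : Nat.modulo m d = (m %% d)%N.
Proof.
case: d => [|d]; first by rewrite modn0.
symmetry; apply: (@Nat.mod_unique _ _ (m %/ d.+1)%N).
  by apply/ssrnat.ltP; rewrite ltn_mod.
by rewrite {1}(divn_eq m d.+1) mulnC.
Qed.

Lemma TM_kron N A B : TM (N * N) (kron N A B) = TM N A *t TM N B.
Proof. by apply/matrixP => i j; rewrite !mxE /kron phi_mul !divE !modE. Qed.

Lemma adj_tens m (A B : 'M[K]_m) : (A *t B)^t* = A^t* *t B^t*.
Proof. by rewrite trmx_tens map_mxT. Qed.

Lemma unindex1 m n (i : 'I_m) (j : 'I_n) : (mxtens_index (i, j) %/ n)%N = i.
Proof. by move: (congr1 (fun p => val p.1) (mxtens_indexK (i, j))). Qed.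
Lemma unindex2 m n (i : 'I_m) (j : 'I_n) : (mxtens_index (i, j) %% n)%N = j.
Proof. by move: (congr1 (fun p => val p.2) (mxtens_indexK (i, j))). Qed.

Lemma tens_dg N d e : dg N d *t dg N e = dg (N * N) (fun k => d (k %/ N)%N * e (k %% N)%N).
Proof.
apply/matrixP => i j.
case: (mxtens_indexP i) => i0 i1; case: (mxtens_indexP j) => j0 j1.
rewrite tensmxE !mxE unindex1 unindex2.
rewrite (can_eq (@mxtens_indexK N N)) xpair_eqE.
case: (i0 == j0); case: (i1 == j1) => /=; by rewrite ?mulr1n ?mulr0n ?mulr0 ?mul0r ?rmorphM.
Qed.

Lemma tens11 N : (1%:M : 'M[K]_N) *t (1%:M : 'M[K]_N) = 1%:M.
Proof. by rewrite -!dg1 tens_dg; apply: dg_ext => k; rewrite mulr1. Qed.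

Lemma tens_unit N (U Q : 'M[K]_N) : U^t* *m U = 1%:M -> Q^t* *m Q = 1%:M ->
  (U *t Q)^t* *m (U *t Q) = 1%:M.
Proof. by move=> hU hQ; rewrite adj_tens tensmx_mul hU hQ tens11. Qed.

Lemma sum_tens (V : nmodType) m n (F : 'I_m * 'I_n -> V) :
  \sum_(k < m * n) F (mxtens_unindex k) = \sum_(i < m) \sum_(j < n) F (i, j).
Proof.
rewrite pair_big /= (reindex (@mxtens_index m n)) /=.
  by apply: eq_bigr => -[i j] _; rewrite mxtens_indexK.
by exists (@mxtens_unindex m n) => k _; rewrite (mxtens_indexK, mxtens_unindexK).
Qed.
Lemma conj_mul_phi (a : Defs.C) : (phi a)^* * phi a = (Cnorm2 a)%:C.
Proof. case: a => x y; rewrite /phi /Cnorm2 /=. apply/eqP; rewrite eq_complex /=.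
rewrite !RplusE !RmultE; apply/andP; split; apply/eqP; ring. Qed.

Lemma phiFM n (U : 'M[K]_n) (i j : 'I_n) : phi (FM U i j) = U i j.
Proof. by rewrite /FM !valK unphiK. Qed.

Lemma conj_mulJ (a b : K) : (a * b^*%C)^*%R = b * a^*%C.
Proof. case: a => x y; case: b => u v; apply/eqP; rewrite eq_complex /=.
apply/andP; split; apply/eqP; ring. Qed.

Section Ket.
Variables (N : nat) (psi : Vec).
Hypothesis hpsi : unit_vec N psi.
Let P := TM N (ketbra psi).

Lemma normsum : \sum_(k < N) (phi (psi k))^* * phi (psi k) = 1.
Proof.
under eq_bigr do rewrite conj_mul_phi.
rewrite -rmorph_sum; have h := hpsi; rewrite /unit_vec rsumE in h; by rewrite h.
Qed.

Lemma P_herm : P^t* = P.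
Proof. apply/matrixP => i j; rewrite !mxE /ketbra !phi_mul !phi_conj; apply: conj_mulJ. Qed.

Lemma P_idem : P *m P = P.
Proof.
apply/matrixP => i j; rewrite !mxE.
under eq_bigr do rewrite !mxE !phi_mul !phi_conj mulrA -[_ * _ * phi (psi _)]mulrA.
rewrite -mulr_suml. rewrite -mulr_sumr normsum mulr1 phi_mul phi_conj //.
Qed.

Lemma P_tr : \tr P = 1.
Proof. rewrite /mxtrace -normsum; apply: eq_bigr => k _; by rewrite mxE phi_mul phi_conj mulrC. Qed.

End Ket.
Lemma dg_inj n d e : dg n d = dg n e -> forall c : 'I_n, d c = e c.
Proof. move=> /matrixP h c; move: (h c c); rewrite !mxE eqxx !mulr1n; exact: complexI. Qed.

Lemma conj_dg n (Q : 'M[K]_n) d : Q^t* *m Q = 1%:M -> Q^t* *m (Q *m dg n d *m Q^t*) *m Q = dg n d.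
Proof. by move=> hQ; rewrite !mulmxA hQ mul1mx -mulmxA hQ mulmx1. Qed.

Lemma mu_props N (P Q : 'M[K]_N) mu : Q^t* *m Q = 1%:M -> P = Q *m dg N mu *m Q^t* ->
  P *m P = P -> \tr P = 1 ->
  (forall c : 'I_N, mu c = 0 \/ mu c = 1) /\ \sum_(c < N) mu c = 1.
Proof.
move=> hQ hP hPP htr; have hQ' := unit_r hQ; split.
  have : dg N mu *m dg N mu = dg N mu.
    rewrite -(conj_dg mu hQ) -hP.
    by rewrite !mulmxA -[Q^t* *m P *m Q *m Q^t*]mulmxA hQ' mulmx1 -[Q^t* *m P *m P]mulmxA hPP.
  rewrite dg_mul => /dg_inj h c; have := h c.
  move=> e; have : mu c * (mu c - 1) = 0 by rewrite mulrBr mulr1 e subrr.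
  move/eqP; rewrite mulf_eq0 subr_eq0 => /orP [/eqP ->|/eqP ->]; by [left|right].
apply: complexI; rewrite -tr_dg -(conj_dg mu hQ) -hP mxtrace_mulC mulmxA hQ' mul1mx htr. by [].
Qed.
Lemma quad_form n (A U : 'M[K]_n) (i : 'I_n) :
  \sum_(j < n) (U j i)^* * \sum_(k < n) A j k * U k i = (U^t* *m A *m U) i i.
Proof.
rewrite mxE; under eq_bigr do rewrite mulr_sumr.
rewrite exchange_big /=; apply: eq_bigr => k _; rewrite mxE mulr_suml.
by apply: eq_bigr => j _; rewrite !mxE mulrA.
Qed.

Lemma rho_eig N (rho : Mat) (U : 'M[K]_N) lam : density N rho -> U^t* *m U = 1%:M ->
  TM N rho = U *m dg N lam *m U^t* -> (forall i : 'I_N, 0 <= lam i) /\ \sum_(i < N) lam i = 1.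
Proof.
move=> [[_ hpsd] htr] hU hrho.
have hD : U^t* *m TM N rho *m U = dg N lam by rewrite hrho conj_dg.
have nonneg : forall i : 'I_N, 0 <= lam i.
  move=> i; have := hpsd (fun j => FM U j i); rewrite re_phi phi_csum => /RleP.
  have -> : \sum_(j < N) phi (Cmul (Cconj (FM U j i)) (csum N (fun k => Cmul (rho j k) (FM U k i))))
      = \sum_(j < N) (U j i)^* * \sum_(k < N) (TM N rho) j k * U k i.
    apply: eq_bigr => j _; rewrite phi_mul phi_conj phiFM phi_csum; congr (_ * _).
    by apply: eq_bigr => k _; rewrite phi_mul phiFM mxE.
  by rewrite quad_form hD mxE eqxx mulr1n !mxE.
split => //; apply: complexI; rewrite -tr_dg -hD mxtrace_mulC mulmxA (unit_r hU) mul1mx.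
by rewrite -phi_trace htr.
Qed.
Lemma eta_nonneg x : (0 <= x <= 1)%R -> (0 <= Defs.eta x)%R.
Proof.
move=> /andP [/RleP h0 /RleP h1]; rewrite /Defs.eta.
case: Rle_dec => [_|hx]; first by [].
apply/RleP; have hx' : Rlt 0 x by Stdlib.micromega.Lra.lra.
have l2 : Rlt 0 (ln 2) by rewrite -ln_1; apply: ln_increasing; Stdlib.micromega.Lra.lra.
have lx : Rle (ln x) 0.
  case: (Rle_lt_or_eq_dec _ _ h1) => [lt|->]; last by rewrite ln_1; apply: Rle_refl.
  rewrite -ln_1; apply: Rlt_le; apply: ln_increasing => //.
have il : Rlt 0 (/ ln 2) by apply: Rinv_0_lt_compat.
rewrite /log2 /Rdiv Ropp_mult_distr_r Ropp_mult_distr_l.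
apply: Rmult_le_pos; first exact: Rlt_le.
apply: Rmult_le_pos; [Stdlib.micromega.Lra.lra | exact: Rlt_le].
Qed.

Lemma eta_mul01 x m : m = 0 \/ m = 1 -> Defs.eta (x * m) = m * Defs.eta x.
Proof.
case=> ->; last by rewrite Rmult_1_r mul1r.
rewrite Rmult_0_r mul0r /Defs.eta; case: Rle_dec => // h; exfalso; apply: h; apply: Rle_refl.
Qed.

Lemma tens_prod n (A1 B1 C1 A2 B2 C2 : 'M[K]_n) :
  (A1 *m B1 *m C1) *t (A2 *m B2 *m C2) = (A1 *t A2) *m (B1 *t B2) *m (C1 *t C2).
Proof. by rewrite !tensmx_mul. Qed.

Lemma dens_eig N rho : density N rho ->
  exists (U : 'M[K]_N) lam, U^t* *m U = 1%:M /\ TM N rho = U *m dg N lam *m U^t*.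
Proof. by move=> [[/hermitianE h _] _]; apply: spectral_herm. Qed.

Lemma le_sum1 n (f : nat -> R) (i : 'I_n) : (forall j : 'I_n, 0 <= f j) -> f i <= \sum_(j < n) f j.
Proof. move=> h; rewrite (bigD1 i) //= lerDl; by apply: sumr_ge0 => j _. Qed.

Lemma vN_main N rho psi : density N rho -> unit_vec N psi ->
  vN (N * N) (kron N rho (ketbra psi)) = vN N rho /\ (0 <= vN N rho)%R.
Proof.
move=> hrho hpsi.
have [U [lam [hU hr]]] := dens_eig hrho.
have [Q [mu [hQ hP]]] := spectral_herm (esym (P_herm N psi)).
have [mu01 musum] := mu_props hQ hP (P_idem hpsi) (P_tr hpsi).
have [lam0 lamsum] := rho_eig hrho hU hr.
have -> : vN N rho = \sum_(i < N) Defs.eta (lam i) by apply: (vN_eq hU hr).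
split; last first.
  apply: sumr_ge0 => i _; apply: eta_nonneg; rewrite lam0 /= -lamsum; exact: le_sum1.
rewrite (@vN_eq _ _ (U *t Q) (fun k => lam (k %/ N)%N * mu (k %% N)%N)).
- transitivity (\sum_(k < N * N) (fun p : 'I_N * 'I_N => Defs.eta (lam p.1 * mu p.2)) (mxtens_unindex k)) => //.
  rewrite (sum_tens (fun p : 'I_N * 'I_N => Defs.eta (lam p.1 * mu p.2))); apply: eq_bigr => a _.
  under eq_bigr do rewrite eta_mul01 ?mu01 //.
  transitivity (\sum_(c < N) mu c * Defs.eta (lam a)); first by [].
  by rewrite -mulr_suml musum mul1r.
- by apply: tens_unit.
- by rewrite TM_kron hr hP tens_prod tens_dg adj_tens.
Qed.
Lemma tdistE n A B : tdist n A B = (\sum_(i < n) singvals n (msub A B) i) / 2.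
Proof. by rewrite /tdist /trace_norm rsumE RmultE RinvE mulrC IZRposE INRE. Qed.

Lemma unit1 n : (1%:M : 'M[K]_n)^t* *m 1%:M = 1%:M.
Proof. by rewrite trmx1 map_mx1 mul1mx. Qed.

Lemma adjB n (A B : 'M[K]_n) : (A - B)^t* = A^t* - B^t*.
Proof. by apply/matrixP => i j; rewrite !mxE rmorphB. Qed.

Lemma dg_const n (c : R) : dg n (fun _ => c) = (c%:C)%:M.
Proof. by apply/matrixP => i j; rewrite !mxE. Qed.

Lemma conj_const n (Q : 'M[K]_n) c : Q^t* *m Q = 1%:M -> Q *m dg n (fun _ => c) *m Q^t* = dg n (fun _ => c).
Proof. move=> hQ; by rewrite dg_const scalar_mxC -mulmxA (unit_r hQ) mulmx1. Qed.

Lemma tens_bound N (Z : 'M[K]_(N * N)) (U1 V1 U2 V2 : 'M[K]_N) (s1 s2 : nat -> R) :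
  (forall i : 'I_N, 0 <= s1 i) -> (forall i : 'I_N, 0 <= s2 i) -> Z^t* *m Z = 1%:M ->
  U1^t* *m U1 = 1%:M -> V1^t* *m V1 = 1%:M -> U2^t* *m U2 = 1%:M -> V2^t* *m V2 = 1%:M ->
  complex.Re (\tr (Z *m ((U1 *m dg N s1 *m V1^t*) *t (U2 *m dg N s2 *m V2^t*))))
    <= (\sum_(i < N) s1 i) * (\sum_(i < N) s2 i).
Proof.
move=> h1 h2 hZ hU1 hV1 hU2 hV2.
rewrite tens_prod tens_dg -adj_tens.
have E : \sum_(k < N * N) s1 (k %/ N)%N * s2 (k %% N)%N = (\sum_(i < N) s1 i) * (\sum_(i < N) s2 i).
  transitivity (\sum_(k < N * N) (fun p : 'I_N * 'I_N => s1 p.1 * s2 p.2) (mxtens_unindex k)) => //.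
  rewrite (sum_tens (fun p : 'I_N * 'I_N => s1 p.1 * s2 p.2)) mulr_suml.
  by apply: eq_bigr => i _; rewrite mulr_sumr.
rewrite -E; apply: (@tr_bound _ _ _ _ (fun k => s1 (k %/ N)%N * s2 (k %% N)%N)) => //.
- move=> k; apply: mulr_ge0; [exact: (h1 (mxtens_unindex k).1) | exact: (h2 (mxtens_unindex k).2)].
- exact: tens_unit.
- exact: tens_unit.
Qed.
Lemma tens_identity n (A B P : 'M[K]_n) : (A - B) *t P + B *t (P - B) = A *t P - B *t B.
Proof. apply/matrixP => i j; rewrite !mxE; ring. Qed.

Lemma dgB n (d e : nat -> R) : dg n (fun k => d k - e k) = dg n d - dg n e.
Proof. apply/matrixP => i j; rewrite !mxE -mulrnBl; congr (_ *+ _). by rewrite rmorphB. Qed.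

Lemma td_main N rho psi : (0 < N)%N -> density N rho -> unit_vec N psi ->
  tdist (N * N) (kron N rho (ketbra psi)) (maxmixed (N * N))
    <= tdist N rho (maxmixed N) + (1 - Rinv (INR N)).
Proof.
move=> hN hrho hpsi.
set c : R := Rinv (INR N).
have hNR : (INR N) = N%:R by rewrite INRE.
have hN0 : (N%:R : R) != 0 by rewrite pnatr_eq0 -lt0n.
have hc0 : 0 <= c by rewrite /c RinvE invr_ge0 hNR ler0n.
have hc1 : c <= 1 by rewrite /c RinvE hNR invf_le1 ?ltr0n // ler1n.
have hNc : N%:R * c = 1 by rewrite /c RinvE hNR mulfV.
have hr_herm : TM N rho = (TM N rho)^t* by case: hrho => [[/hermitianE h _] _].
set P := TM N (ketbra psi).
have [Q [mu [hQ hP]]] := spectral_herm (esym (P_herm N psi)).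
have [mu01 musum] := mu_props hQ hP (P_idem hpsi) (P_tr hpsi).
have hmu0 : forall i : 'I_N, 0 <= mu i by move=> i; case: (mu01 i) => ->.
have hXs : is_svd N (msub rho (maxmixed N)) (singvals N (msub rho (maxmixed N))).
  by apply: herm_svd; apply/hermitianE; rewrite TM_msub /maxmixed TM_diagm adjB dg_adj -hr_herm.
move/svdE: hXs => [hs1 [U1 [V1 [hU1 [hV1 hX]]]]].
set D := msub (kron N rho (ketbra psi)) (maxmixed (N * N)).
have hD : TM (N * N) D = TM N rho *t P - dg N (fun _ => c) *t dg N (fun _ => c).
  rewrite /D TM_msub TM_kron /maxmixed TM_diagm tens_dg; congr (_ - _); apply: dg_ext => k.
  by rewrite /c mult_INR RmultE !RinvE invfM.
have hDs : is_svd (N * N) D (singvals (N * N) D).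
  by apply: herm_svd; apply/hermitianE; rewrite hD adjB !adj_tens !dg_adj -hr_herm /P P_herm.
move/svdE: hDs => [hs [U [V [hU [hV hDd]]]]].
rewrite !tdistE.
have [hsum hZ] := tr_eq (singvals (N * N) D) hU hV.
rewrite -hsum -hDd.
have [W [hW hYW]] := eig_svd (fun k => mu k - c) hQ.
have decomp : TM (N * N) D = (U1 *m dg N (singvals N (msub rho (maxmixed N))) *m V1^t*) *t (Q *m dg N mu *m Q^t*)
   + (1%:M *m dg N (fun _ => c) *m (1%:M)^t*) *t (Q *m dg N (fun k => `|mu k - c|) *m W^t*).
  rewrite -hYW dgB mulmxBr mulmxBl (conj_const _ hQ) (conj_const _ (unit1 N)) -hX -hP.
  by rewrite hD TM_msub /maxmixed TM_diagm tens_identity.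
rewrite decomp mulmxDr mxtraceD raddfD /=.
have b1 := tens_bound (fun i => hs1 i) hmu0 hZ hU1 hV1 hQ hQ.
have b2 := @tens_bound N _ _ _ _ _ (fun _ => c) (fun k => `|mu k - c|) (fun _ => hc0) (fun _ => normr_ge0 _) hZ (unit1 N) (unit1 N) hQ hW.
move: b1 b2; rewrite musum mulr1.
have -> : \sum_(i < N) c = 1 by rewrite sumr_const card_ord -mulr_natl.
have -> : \sum_(i < N) `|mu i - c| = \sum_(i < N) (mu i * (1 - 2 * c) + c).
  apply: eq_bigr => i _; case: (mu01 i) => ->.
    by rewrite mul0r !add0r normrN ger0_norm.
  by rewrite mul1r ger0_norm ?subr_ge0 //; ring.
rewrite big_split /= -mulr_suml musum sumr_const card_ord -[c *+ N]mulr_natl hNc.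
move=> b1 b2. lra.
Qed.
Local Open Scope R_scope.

Theorem mainTheorem7 (N : nat) (rho : Mat) (psi : Vec) :
  Peano.le 2 N ->
  density N rho ->
  unit_vec N psi ->
  QSCM (Nat.mul N N) (kron N rho (ketbra psi))
    <= vN N rho / (2 * log2 (INR N)) * (tdist N rho (maxmixed N) + INR (Nat.sub N 1) / INR N).
Proof.
move=> /ssrnat.leP hN hrho hpsi.
have -> : Nat.mul N N = (N * N)%N by rewrite multE.
have -> : Nat.sub N 1 = (N - 1)%N by rewrite minusE.
have hN0 : (0 < N)%N by apply: leq_trans hN.
have [hvN hS] := vN_main hrho hpsi.
have htd := td_main hN0 hrho hpsi.
have hS' : 0 <= vN N rho by apply/RleP.
have htd' : tdist (N * N) (kron N rho (ketbra psi)) (maxmixed (N * N))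
    <= tdist N rho (maxmixed N) + (1 - / INR N) by apply/RleP; exact: htd.
have hNR : 2 <= INR N by apply: (le_INR 2); apply/ssrnat.leP.
have hNpos : 0 < INR N by Stdlib.micromega.Lra.lra.
have hL : 0 < log2 (INR N).
  rewrite /log2 /Rdiv; apply: Rmult_lt_0_compat.
    rewrite -ln_1; apply: ln_increasing; Stdlib.micromega.Lra.lra.
  apply: Rinv_0_lt_compat; rewrite -ln_1; apply: ln_increasing; Stdlib.micromega.Lra.lra.
have hlog : log2 (INR (N * N)) = 2 * log2 (INR N).
  by rewrite /log2 mult_INR ln_mult // /Rdiv Rmult_plus_distr_r Stdlib.Reals.RIneq.double.
have hfrac : INR (N - 1) / INR N = 1 - / INR N.
  rewrite minus_INR; last by apply/ssrnat.leP; apply: leq_trans hN.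
  rewrite /Rdiv Rmult_minus_distr_r Rinv_r //=; last by apply: Rgt_not_eq.
  by rewrite Rmult_1_l.
rewrite /QSCM hvN hlog hfrac.
have hpos : 0 <= vN N rho / (2 * log2 (INR N)).
  rewrite /Rdiv; apply: Rmult_le_pos => //; apply: Rlt_le; apply: Rinv_0_lt_compat.
  Stdlib.micromega.Lra.lra.
have -> : / (2 * log2 (INR N)) * vN N rho = vN N rho / (2 * log2 (INR N)).
  by rewrite /Rdiv Rmult_comm.
by apply: Rmult_le_compat_l.
Qed.
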